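(* Let $G\in\mathcal{M}_k(n,s)$ and let $\mathrm{Sh}(G)$ be any $k$-graph obtained from $G$ by a finite sequence of shifts $\mathrm{sh}_{ij}$ (with $i<j$) which is invariant under all shifts, i.e. $\mathrm{sh}_{ij}(\mathrm{Sh}(G))=\mathrm{Sh}(G)$ for all vertices $i<j$. Then: (i) $\mathrm{Sh}(G)\in\mathcal{M}_k(n,s)$; (ii) if $n\neq 2k$ and $\mathrm{Sh}(G)\in\mathrm{Cov}_k(n,s)$, then $G\in\mathrm{Cov}_k(n,s)$; (iii) if $n\neq 2k$ and $\mathrm{Sh}(G)\in\mathrm{Cl}_k(n,s)$, then $G\in\mathrm{Cl}_k(n,s)$.
   Context: A $k$-uniform hypergraph ($k$-graph) $G=(V,E)$ consists of a finite vertex set $V\subseteq\mathbb{N}$ and a family $E$ of $k$-element subsets of $V$ (edges). A matching is a family of pairwise disjoint edges; $\mu(G)$ is the size of a largest matching in $G$. Let $\mathcal{H}_k(n,s)$ be the set of all $k$-graphs $G=(V,E)$ with $|V|=n$ and $\mu(G)=s$; let $\mu_k(n,s)=\max\{|E(G)|: G\in\mathcal{H}_k(n,s)\}$ and $\mathcal{M}_k(n,s)=\{G\in\mathcal{H}_k(n,s): |E(G)|=\mu_k(n,s)\}$. $\mathrm{Cov}_k(n,s)$ is the family of $k$-graphs $G=(V,E)$ with $|V|=n$ such that for some $S\subseteq V$ with $|S|=s$, $E=\{e\subseteq V: |e|=k,\ e\cap S\neq\emptyset\}$. $\mathrm{Cl}_k(n,s)$ is the family of $k$-graphs $G=(V,E)$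 with $|V|=n$ such that for some $T\subseteq V$ with $|T|=ks+k-1$, $E=\{e\subseteq T: |e|=k\}$. For vertices $i<j$, the $(i,j)$-shift $\mathrm{sh}_{ij}(G)$ is the $k$-graph on $V$ obtained from $G$ by replacing each edge $e\in E$ with $j\in e$, $i\notin e$ and $(e\setminus\{j\})\cup\{i\}\notin E$ by the set $(e\setminus\{j\})\cup\{i\}$ (all other edges are kept). *)

(* Defs.v *)
From HB Require Import structures.
From mathcomp Require Import all_boot.
From mathcomp Require Import finmap.
Set Implicit Arguments. Unset Strict Implicit. Unset Printing Implicit Defensive.
Local Open Scope fset_scope.

Definition is_kgraph (k : nat) (V : {fset nat}) (E : {fset {fset nat}}) : Prop :=
  forall e, e \in E -> e `<=` V /\ #|` e| = k.

Definition is_matching (E M : {fset {fset nat}}) : Prop :=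
  M `<=` E /\ (forall e f, e \in M -> f \in M -> e != f -> [disjoint e & f]).

Definition matching_number (E : {fset {fset nat}}) (s : nat) : Prop :=
  (exists M, is_matching E M /\ #|` M| = s) /\
  (forall M, is_matching E M -> #|` M| <= s).

Definition in_H (k n s : nat) (V : {fset nat}) (E : {fset {fset nat}}) : Prop :=
  is_kgraph k V E /\ #|` V| = n /\ matching_number E s.

Definition in_M (k n s : nat) (V : {fset nat}) (E : {fset {fset nat}}) : Prop :=
  in_H k n s V E /\
  (forall V' E', in_H k n s V' E' -> #|` E'| <= #|` E|).

Definition in_Cov (k n s : nat) (V : {fset nat}) (E : {fset {fset nat}}) : Prop :=
  #|` V| = n /\
  exists S : {fset nat}, S `<=` V /\ #|` S| = s /\
    (forall e : {fset nat},
        e \in E <-> (e `<=` V /\ #|` e| = k /\ e `&` S != fset0)).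

Definition in_Cl (k n s : nat) (V : {fset nat}) (E : {fset {fset nat}}) : Prop :=
  #|` V| = n /\
  exists T : {fset nat}, T `<=` V /\ #|` T| = k * s + k - 1 /\
    (forall e : {fset nat}, e \in E <-> (e `<=` T /\ #|` e| = k)).

Definition shift_edge (i j : nat) (E : {fset {fset nat}}) (e : {fset nat}) : {fset nat} :=
  if [&& j \in e, i \notin e & (i |` (e `\ j)) \notin E] then i |` (e `\ j) else e.

Definition sh (i j : nat) (E : {fset {fset nat}}) : {fset {fset nat}} :=
  [fset shift_edge i j E e | e in E].

Definition sh_seq (ps : seq (nat * nat)) (E : {fset {fset nat}}) : {fset {fset nat}} :=
  foldl (fun E' p => sh p.1 p.2 E') E ps.

Definition valid_shifts (V : {fset nat}) (ps : seq (nat * nat)) : Prop :=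
  forall p, p \in ps -> [/\ p.1 \in V, p.2 \in V & p.1 < p.2].

(* Main.v *)
Require Import Defs.
From HB Require Import structures.
From mathcomp Require Import all_boot.
From mathcomp Require Import finmap.
From mathcomp Require Import zify.
From Stdlib Require Import Classical.
Local Open Scope fset_scope.
Set Implicit Arguments. Unset Strict Implicit. Unset Printing Implicit Defensive.

Definition tr (i j x : nat) := if x == i then j else if x == j then i else x.
Definition sw (i j : nat) (e : {fset nat}) : {fset nat} := [fset tr i j x | x in e].

Section Swap.
Variables i j : nat.

Lemma tr_invol x : tr i j (tr i j x) = x.
Proof.
rewrite /tr; case: (x =P i) => [->|xi]; first by case: (j =P i) => [->|] //; rewrite eqxx.
case: (x =P j) => [->|xj]; first by rewrite eqxx.
by move/eqP/negPf: xi => ->; move/eqP/negPf: xj => ->.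
Qed.

Lemma tr_inj : injective (tr i j).
Proof. by move=> x y H; rewrite -(tr_invol x) H tr_invol. Qed.

Lemma in_sw x e : (x \in sw i j e) = (tr i j x \in e).
Proof. by rewrite -{1}(tr_invol x) /sw mem_imfset //; exact: tr_inj. Qed.

Lemma sw_invol e : sw i j (sw i j e) = e.
Proof. by apply/fsetP => x; rewrite !in_sw tr_invol. Qed.

Lemma sw_inj : injective (sw i j).
Proof. by move=> x y H; rewrite -(sw_invol x) H sw_invol. Qed.

Lemma card_sw e : #|` sw i j e| = #|` e|.
Proof. by rewrite /sw card_imfset //=; exact: tr_inj. Qed.

Lemma sw_sub e V : i \in V -> j \in V -> (sw i j e `<=` V) = (e `<=` V).
Proof.
move=> iV jV.
have H : forall e, e `<=` V -> sw i j e `<=` V.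
  move=> f /fsubsetP fV; apply/fsubsetP => x; rewrite in_sw => /fV.
  rewrite /tr; case: (x =P i) => [->|] //; case: (x =P j) => [->|] //.
apply/idP/idP; last exact: H.
by move/H; rewrite sw_invol.
Qed.

Lemma sw_disjoint e f : [disjoint sw i j e & sw i j f] = [disjoint e & f].
Proof.
apply/fdisjointP/fdisjointP => H x.
  by move=> xe; have := H (tr i j x); rewrite !in_sw tr_invol => /(_ xe).
by rewrite !in_sw; apply: H.
Qed.

Hypothesis ij : i != j.

Lemma sw_fix e : (i \in e) = (j \in e) -> sw i j e = e.
Proof.
move=> H; apply/fsetP => x; rewrite in_sw /tr.
case: (x =P i) => [->|_]; first by rewrite H.
by case: (x =P j) => [->|_] //; rewrite H.
Qed.

Lemma sw_ji e : j \in e -> i \notin e -> sw i j e = i |` (e `\ j).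
Proof.
move=> je ie; apply/fsetP => x; rewrite in_sw /tr !inE.
case: (x =P i) => [->|xi]; first by rewrite je (negPf ij).
by case: (x =P j) => [->|xj] /=; [rewrite (negPf ie) | ].
Qed.

Lemma sw_ij e : i \in e -> j \notin e -> sw i j e = j |` (e `\ i).
Proof.
move=> ie je; apply/fsetP => x; rewrite in_sw /tr !inE.
case: (x =P i) => [->|xi]; first by rewrite (negPf je) (negPf ij).
by case: (x =P j) => [->|xj] /=; [rewrite ie | ].
Qed.

Lemma in_sw_i e : (i \in sw i j e) = (j \in e).
Proof. by rewrite in_sw /tr eqxx. Qed.
Lemma in_sw_j e : (j \in sw i j e) = (i \in e).
Proof. by rewrite in_sw /tr eq_sym (negPf ij) eqxx. Qed.

End Swap.

Section Shift.
Variables (i j : nat) (F : {fset {fset nat}}).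
Hypothesis ij : i != j.

Lemma shift_edgeE e : shift_edge i j F e =
  if [&& j \in e, i \notin e & sw i j e \notin F] then sw i j e else e.
Proof.
rewrite /shift_edge; case: (boolP (j \in e)) => //= je.
case: (boolP (i \in e)) => //= ie.
by rewrite sw_ji.
Qed.

Lemma in_shP e : reflect (exists2 f, f \in F & e = shift_edge i j F f) (e \in sh i j F).
Proof.
rewrite /sh; apply: (iffP idP) => [/imfsetP [f fF ->]|[f fF ->]]; first by exists f.
by apply/imfsetP; exists f.
Qed.

Lemma shift_cases f : shift_edge i j F f = f \/
  [/\ shift_edge i j F f = sw i j f, j \in f, i \notin f & sw i j f \notin F].
Proof.
rewrite shift_edgeE; case: (boolP [&& _, _ & _]) => [/and3P [a b c]|_]; last by left.
by right.
Qed.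

Lemma sh_L3 e : (i \in e) = (j \in e) -> (e \in sh i j F) = (e \in F).
Proof.
move=> H; apply/in_shP/idP => [[f fF Ee]|eF].
  subst e; case: (shift_cases f) => [->//|[E jf if_ _]].
  by move: H; rewrite E in_sw_i // in_sw_j // jf (negPf if_).
exists e => //; rewrite shift_edgeE; case: (boolP (j \in e)) => //= je.
by rewrite H je.
Qed.

Lemma sh_L1 e : j \in e -> i \notin e -> (e \in sh i j F) = (e \in F) && (sw i j e \in F).
Proof.
move=> je ie; apply/in_shP/andP => [[f fF Ee]|[eF seF]].
  subst e.
  case: (shift_cases f) => [E|[E jf if_ _]].
    rewrite E in je ie *; split => //.
    apply/negPn/negP => nsf.
    move: E; rewrite shift_edgeE je ie nsf /= => H.
    by move: ie; rewrite -H in_sw_i // je.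
  by move: ie; rewrite E in_sw_i // jf.
by exists e => //; rewrite shift_edgeE je ie seF.
Qed.

Lemma sh_L2 e : i \in e -> j \notin e -> (e \in sh i j F) = (e \in F) || (sw i j e \in F).
Proof.
move=> ie je; apply/in_shP/orP => [[f fF Ee]|[eF|seF]].
  subst e.
  case: (shift_cases f) => [->|[-> _ _ _]]; first by left.
  by right; rewrite sw_invol.
  by exists e => //; rewrite shift_edgeE (negPf je).
case: (boolP (e \in F)) => [eF|eF]; first by exists e => //; rewrite shift_edgeE (negPf je).
exists (sw i j e) => //; by rewrite shift_edgeE in_sw_i // in_sw_j // ie je sw_invol eF.

Qed.

Lemma card_sh : #|` sh i j F| = #|` F|.
Proof.
rewrite /sh card_in_imfset //= => f g fF gF.
case: (shift_cases f) => [->|[-> jf if_ nf]]; case: (shift_cases g) => [->|[-> jg ig ng]] //.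
- by move=> E; move: ng; rewrite -E fF.
- by move=> E; move: nf; rewrite E gF.
- by apply: sw_inj.
Qed.

Lemma sh_kgraph k V : i \in V -> j \in V -> is_kgraph k V F -> is_kgraph k V (sh i j F).
Proof.
move=> iV jV kg e /in_shP [f /kg [fV fk] ->].
case: (shift_cases f) => [->//|[-> _ _ _]].
by rewrite sw_sub // card_sw.
Qed.

End Shift.

Section Frankl.
Variables (i j : nat) (F : {fset {fset nat}}).
Hypothesis ij : i != j.

Lemma matching_sh_sw M : is_matching (sh i j F) M ->
  M `<=` F \/ [fset sw i j e | e in M] `<=` F.
Proof.
move=> [MF Md]; case: (boolP (M `<=` F)) => [H|/fsubsetPn [e0 e0M e0F]]; first by left.
right.
have e0s := fsubsetP MF _ e0M.
have [ie0 je0] : i \in e0 /\ j \notin e0.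
  case: (boolP (i \in e0)) => ie; case: (boolP (j \in e0)) => je.
  - by move: e0s; rewrite sh_L3 ?ie ?je // => /(negP e0F).
  - by [].
  - by move: e0s; rewrite sh_L1 // => /andP [/(negP e0F)].
  - by move: e0s; rewrite sh_L3 ?(negPf ie) ?(negPf je) // => /(negP e0F).
apply/fsubsetP => x /imfsetP [e eM ->].
have es := fsubsetP MF _ eM.
case: (e =P e0) => [->|ne].
  by move: e0s; rewrite sh_L2 // (negPf e0F).
have /fdisjointP dis := Md _ _ eM e0M (introN eqP ne).
have ie : i \notin e by apply/negP => /dis; rewrite ie0.
case: (boolP (j \in e)) => je.
  by move: es; rewrite sh_L1 // => /andP [].
rewrite sw_fix ?(negPf ie) ?(negPf je) //.
by move: es; rewrite sh_L3 ?(negPf ie) ?(negPf je).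
Qed.


Lemma matching_sh M : is_matching (sh i j F) M -> exists M0, is_matching F M0 /\ #|` M0| = #|` M|.
Proof.
move=> HM; case: (matching_sh_sw HM) => H.
  by exists M; split => //; split => //; case: HM.
exists [fset sw i j e | e in M]; split; last by rewrite card_imfset //=; exact: sw_inj.
split => // a b /imfsetP [a' a'M ->] /imfsetP [b' b'M ->] nab.
rewrite sw_disjoint; case: HM => _ Hd; apply: Hd => //.
by apply/eqP => E; move: nab; rewrite E eqxx.
Qed.

End Frankl.

Lemma matching0 X : is_matching X fset0.
Proof. by split; [exact: fsub0set | move=> e f; rewrite inE]. Qed.

Lemma matching_sub X Y M : X `<=` Y -> is_matching X M -> is_matching Y M.
Proof. by move=> XY [MX Md]; split => //; exact: fsubset_trans XY. Qed.

Lemma matching_card X M : is_matching X M -> #|` M| <= #|` X|.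
Proof. by case=> MX _; apply: fsubset_leq_card. Qed.

Lemma max_exists (P : nat -> Prop) b : P 0 -> (forall m, P m -> m <= b) ->
  exists m, P m /\ forall m', P m' -> m' <= m.
Proof.
elim: b => [|b IH] P0 Hb; first by exists 0; split => // m' /Hb.
case: (classic (P b.+1)) => [Pb|nPb]; first by exists b.+1.
apply: IH => // m Pm; have := Hb _ Pm; rewrite leq_eqVlt => /orP [/eqP E|//].
by move: Pm; rewrite E.
Qed.

Lemma mu_exists X : exists m, matching_number X m.
Proof.
have [m [[M [HM <-]] Hm]] : exists m, (exists M, is_matching X M /\ #|` M| = m) /\
   forall m', (exists M, is_matching X M /\ #|` M| = m') -> m' <= m.
  apply: (@max_exists _ #|` X|); first by exists fset0; split; [exact: matching0 | exact: cardfs0].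
  by move=> m [M [HM <-]]; exact: matching_card.
exists #|` M|; split; first by exists M.
by move=> M' HM'; apply: Hm; exists M'.
Qed.

Lemma matching_U1 X e M : is_matching (e |` X) M -> is_matching X (M `\ e).
Proof.
case=> MX Md; split; last by move=> a b /fsetD1P [_ aM] /fsetD1P [_ bM]; apply: Md.
apply/fsubsetP => a /fsetD1P [ae aM]; move: (fsubsetP MX _ aM); rewrite inE.
by rewrite in_fset1 (negPf ae).
Qed.

Lemma grow K s : forall d X m, #|` K `\` X| = d -> X `<=` K -> matching_number X m -> m < s ->
  (exists M, is_matching K M /\ #|` M| = s) ->
  exists Y, [/\ X `<` Y, Y `<=` K & matching_number Y s].
Proof.
elim=> [|d IH] X m Hd XK [_ HmX] ms [M [HM Ms]].
  move/eqP: Hd; rewrite cardfs_eq0 fsetD_eq0 => KX.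
  have := HmX M (matching_sub KX HM); rewrite Ms => /(leq_trans ms); by rewrite ltnn.
have : K `\` X != fset0 by rewrite -cardfs_eq0 Hd.
case/fset0Pn => e /fsetDP [eK eX].
set Y0 := e |` X.
have Y0K : Y0 `<=` K by rewrite fsubUset fsub1set eK XK.
have XY0 : X `<` Y0.
  rewrite fproperEneq fsubsetU1 andbT; apply/eqP => E.
  by move: eX; rewrite E fset1U1.
have [m0 Hm0] := mu_exists Y0.
have m0m : m0 <= m.+1.
  case: Hm0 => [[M0 [HM0 <-]] _].
  have := HmX _ (matching_U1 HM0).
  by rewrite (cardfsD1 e M0); case: (e \in M0) => H; rewrite ?add1n ?add0n ?ltnS // (leq_trans H).
case: (m0 =P s) => [Es|ns].
  by exists Y0; split => //; rewrite -Es.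
have m0s : m0 < s.
  by rewrite ltn_neqAle (introN eqP ns) (leq_trans m0m ms).
have HdY : #|` K `\` Y0| = d.
  have := cardfsD1 e (K `\` X); rewrite inE eK eX Hd /= add1n => -[->].
  have -> : K `\` Y0 = K `\` X `\ e by apply/fsetP => x; rewrite !inE negb_or andbA.
  by [].
have [Y [Y0Y YK HY]] := IH Y0 m0 HdY Y0K Hm0 m0s (ex_intro _ M (conj HM Ms)).
exists Y; split => //; exact: fproper_sub_trans XY0 (fproper_sub Y0Y).
Qed.

Definition Kc (k : nat) (V : {fset nat}) : {fset {fset nat}} :=
  [fset e in fpowerset V | #|` e| == k].

Lemma in_Kc k V e : (e \in Kc k V) = (e `<=` V) && (#|` e| == k).
Proof. by rewrite /Kc !inE /= fpowersetE. Qed.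

Lemma kgraphP k V F : is_kgraph k V F <-> F `<=` Kc k V.
Proof.
split => [H|/fsubsetP H e eF].
  by apply/fsubsetP => e /H [eV ek]; rewrite in_Kc eV ek eqxx.
by move: (H e eF); rewrite in_Kc => /andP [-> /eqP].
Qed.

Lemma sh_M k n s V F i j : i != j -> i \in V -> j \in V ->
  in_M k n s V F -> in_M k n s V (sh i j F).
Proof.
move=> ij iV jV [[kg [nV [[M [HM Ms]] Hmu]]] Hmax].
have kg' := sh_kgraph ij iV jV kg.
have [m Hm] := mu_exists (sh i j F).
have ms : m <= s.
  case: Hm => [[M' [HM' <-]] _].
  by have [M0 [HM0 <-]] := matching_sh ij HM'; apply: Hmu.
have Hc := card_sh F ij.
case: (m =P s) => [Es|ns].
  split; last by move=> V' E' /Hmax; rewrite Hc.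
  by split => //; split => //; rewrite -Es.
have m_s : m < s by rewrite ltn_neqAle (introN eqP ns) ms.
have [|Y [FY YK HY]] := grow (erefl _) (iffLR (kgraphP _ _ _) kg') Hm m_s.
  exists M; split => //; apply: matching_sub HM; exact/kgraphP.
have : #|` Y| <= #|` F|.
  apply: (Hmax V); split; first exact/kgraphP.
  by split.
by rewrite -Hc leqNgt (fproper_ltn_card FY).
Qed.

Lemma card_disjU (A B : {fset nat}) : [disjoint A & B] -> #|` A `|` B| = (#|` A| + #|` B|)%N.
Proof. by move=> d; rewrite cardfsU (disjoint_fsetI0 d) cardfs0 subn0. Qed.

Lemma sub_exists t (A : {fset nat}) : t <= #|` A| -> exists B, B `<=` A /\ #|` B| = t.
Proof.
elim: t => [|t IH] H; first by exists fset0; rewrite fsub0set cardfs0.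
have [B [BA Bt]] := IH (ltnW H).
have : A `\` B != fset0.
  by rewrite -cardfs_eq0 cardfsDS // Bt; apply/eqP => /eqP; rewrite subn_eq0 leqNgt H.
case/fset0Pn => x /fsetDP [xA xB].
exists (x |` B); rewrite fsubUset fsub1set xA BA cardfsU1 xB Bt; split => //.
Qed.

Lemma matching_vertices_aux k (V : {fset nat}) N : forall (M : {fset {fset nat}}), #|` M| = N ->
  (forall e, e \in M -> e `<=` V /\ #|` e| = k) ->
  (forall e f, e \in M -> f \in M -> e != f -> [disjoint e & f]) ->
  exists U, [/\ U `<=` V, #|` U| = k * N & forall x, x \in U -> exists2 e, e \in M & x \in e].
Proof.
elim: N => [|N IH] M MN HM Hd.
  by exists fset0; rewrite fsub0set cardfs0 muln0; split => // x; rewrite inE.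
have : M != fset0 by rewrite -cardfs_eq0 MN.
case/fset0Pn => e eM.
have h1 : #|` M `\ e| = N by move: MN; rewrite (cardfsD1 e M) eM add1n => -[].
have h2 : forall f, f \in M `\ e -> f `<=` V /\ #|` f| = k by move=> f /fsetD1P [_ /HM].
have h3 : forall a b, a \in M `\ e -> b \in M `\ e -> a != b -> [disjoint a & b].
  by move=> a b /fsetD1P [_ aM] /fsetD1P [_ bM]; apply: Hd.
have [U [UV Uc Ux]] := IH _ h1 h2 h3.
have [eV ek] := HM _ eM.
have dis : [disjoint e & U].
  apply/fdisjointP => x xe; apply/negP => /Ux [f /fsetD1P [fe fM] xf].
  by have /fdisjointP := Hd _ _ fM eM fe => /(_ x xf); rewrite xe.
exists (e `|` U); split.
- by rewrite fsubUset eV UV.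
- by rewrite card_disjU // Uc ek mulnS.
- move=> x /fsetUP [xe|/Ux [f /fsetD1P [_ fM] xf]]; [by exists e | by exists f].
Qed.

Lemma matching_vertices k (V : {fset nat}) (M : {fset {fset nat}}) : (forall e, e \in M -> e `<=` V /\ #|` e| = k) ->
  (forall e f, e \in M -> f \in M -> e != f -> [disjoint e & f]) ->
  exists U, [/\ U `<=` V, #|` U| = k * #|` M| & forall x, x \in U -> exists2 e, e \in M & x \in e].
Proof. exact: matching_vertices_aux. Qed.

Lemma matching_Kc_bound k V M : is_matching (Kc k V) M -> k * #|` M| <= #|` V|.
Proof.
case=> MK Md; have [|U [UV <- _]] := matching_vertices (k:=k) (V:=V) _ Md.
  by move=> e /(fsubsetP MK); rewrite in_Kc => /andP [-> /eqP].
exact: fsubset_leq_card.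
Qed.

Lemma Kc_sw i j k V e : i \in V -> j \in V -> (sw i j e \in Kc k V) = (e \in Kc k V).
Proof. by move=> iV jV; rewrite !in_Kc sw_sub // card_sw. Qed.

Lemma sh_Kc i j k V : i != j -> i \in V -> j \in V -> sh i j (Kc k V) = Kc k V.
Proof.
move=> ij iV jV; apply/fsetP => e; apply/imfsetP/idP => [[f fK ->]|eK].
  rewrite shift_edgeE //; case: ifP => // /and3P [_ _ nf].
  by move: nf; rewrite Kc_sw // fK.
exists e => //; rewrite shift_edgeE //; case: ifP => // /and3P [_ _ nf].
by move: nf; rewrite Kc_sw // eK.
Qed.

Lemma trivial_case k n s V F : in_M k n s V F -> n < s.+1 * k -> F = Kc k V.
Proof.
move=> [[kg [nV [[M [HM Ms]] Hmu]]] Hmax] ns.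
have FK : F `<=` Kc k V by apply/kgraphP.
have H : in_H k n s V (Kc k V).
  split; first exact/kgraphP/fsubset_refl.
  split => //; split; first by exists M; split => //; exact: matching_sub HM.
  move=> M' /matching_Kc_bound; rewrite nV => H.
  have : k * #|` M'| < k * s.+1 by rewrite mulnC in ns; exact: leq_ltn_trans ns.
  by rewrite ltn_mul2l => /andP [_].
apply/eqP; rewrite eqEfsubset FK /=.
have := Hmax _ _ H => c.
have /fsubset_leqif_cards [_ E] := FK.
by move: E; rewrite eqn_leq c fsubset_leq_card //= eqEfsubset FK /= => /esym.
Qed.

Lemma fill k : 0 < k -> forall m (X S0 : {fset nat}), S0 `<=` X -> #|` S0| = m -> m * k <= #|` X| ->
  exists M : {fset {fset nat}}, [/\ #|` M| = m,
    (forall e, e \in M -> [/\ e `<=` X, #|` e| = k & e `&` S0 != fset0]) &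
    (forall e f, e \in M -> f \in M -> e != f -> [disjoint e & f])].
Proof.
move=> k0; elim=> [|m IH] X S0 SX Sm mX.
  exists fset0; split; [exact: cardfs0 | by move=> e; rewrite inE | by move=> e f; rewrite inE].
have : S0 != fset0 by rewrite -cardfs_eq0 Sm.
case/fset0Pn => x xS.
have [R [RX Rk]] : exists R, R `<=` X `\` S0 /\ #|` R| = k.-1.
  apply: sub_exists; rewrite cardfsDS // Sm.
  have := leq_pmulr m k0; move: mX; rewrite mulSn; lia.
set e := x |` R.
have xR : x \notin R by apply/negP => /(fsubsetP RX); rewrite inE xS.
have ek : #|` e| = k by rewrite cardfsU1 xR Rk; lia.
have eX : e `<=` X by rewrite fsubUset fsub1set (fsubsetP SX _ xS) (fsubset_trans RX) ?fsubsetDl.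
have S'X' : S0 `\ x `<=` X `\` e.
  apply/fsubsetP => y /fsetD1P [yx yS]; rewrite inE (fsubsetP SX _ yS) andbT /e inE negb_or in_fset1 yx /=.
  by apply/negP => /(fsubsetP RX); rewrite inE yS.
have S'm : #|` S0 `\ x| = m by move: Sm; rewrite (cardfsD1 x S0) xS add1n => -[].
have X'm : m * k <= #|` X `\` e| by rewrite cardfsDS // ek; move: mX; rewrite mulSn; lia.
have [M [Mm HM Md]] := IH _ _ S'X' S'm X'm.
have eM : e \notin M.
  apply/negP => /HM [/fsubsetP eX' _ _].
  by have := eX' x (fset1U1 _ _); rewrite inE fset1U1.
exists (e |` M); split.
- by rewrite cardfsU1 eM Mm.
- move=> f /fset1UP [->|fM].
    split => //; apply/fset0Pn; exists x; by rewrite inE fset1U1 xS.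
  have [fX fk fS] := HM _ fM; split => //.
    exact: fsubset_trans fX (fsubsetDl _ _).
  case/fset0Pn: fS => y; rewrite !inE => /and3P [yf _ yS].
  by apply/fset0Pn; exists y; rewrite inE yS yf.
- have dis : forall f, f \in M -> [disjoint e & f].
    move=> f /HM [fX _ _]; rewrite fdisjoint_sym; apply/fdisjointP => y /(fsubsetP fX).
    by rewrite inE => /andP [].
  move=> a b /fset1UP [->|aM] /fset1UP [->|bM] ab.
  + by move: ab; rewrite eqxx.
  + exact: dis.
  + by rewrite fdisjoint_sym; exact: dis.
  + exact: Md.
Qed.

Lemma add_matching F M (a : {fset nat}) : is_matching F M -> a \in F -> a != fset0 ->
  (forall e, e \in M -> [disjoint a & e]) -> is_matching F (a |` M) /\ #|` a |` M| = #|` M|.+1.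
Proof.
move=> [MF Md] aF a0 Ha.
have aM : a \notin M.
  apply/negP => /Ha; rewrite -fsetI_eq0 fsetIid; exact/negP.
split; last by rewrite cardfsU1 aM.
split; first by rewrite fsubUset fsub1set aF MF.
move=> e f /fset1UP [->|eM] /fset1UP [->|fM] ef.
- by move: ef; rewrite eqxx.
- exact: Ha.
- by rewrite fdisjoint_sym; exact: Ha.
- exact: Md.
Qed.

Section Kneser.
Variables (r : nat) (W : {fset nat}) (P : {fset nat} -> Prop).
Hypothesis Hd : forall A B, A `<=` W -> B `<=` W -> #|` A| = r -> #|` B| = r ->
  [disjoint A & B] -> P A -> P B.
Hypothesis HW : 0 < r -> 2 * r + 1 <= #|` W|.

Lemma kneser_aux d : forall R R', #|` R `\` R'| = d -> R `<=` W -> R' `<=` W ->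
  #|` R| = r -> #|` R'| = r -> P R -> P R'.
Proof.
elim: d => [|d IH] R R' Hdd RW R'W Rr R'r PR.
  move/eqP: Hdd; rewrite cardfs_eq0 fsetD_eq0 => RR'.
  have /fsubset_leqif_cards [_ E] := RR'.
  by move: E; rewrite Rr R'r eqxx => /esym/eqP <-.
have : R `\` R' != fset0 by rewrite -cardfs_eq0 Hdd.
case/fset0Pn => x /fsetDP [xR xR'].
have c1 : #|` R' `\` R| = d.+1.
  by move: Hdd; rewrite !cardfsD fsetIC Rr R'r.
have : R' `\` R != fset0 by rewrite -cardfs_eq0 c1.
case/fset0Pn => y /fsetDP [yR' yR].
set R'' := y |` (R `\ x).
have yRx : y \notin R `\ x by rewrite inE negb_and yR orbT.
have R''r : #|` R''| = r.
  by rewrite cardfsU1 yRx; move: Rr; rewrite (cardfsD1 x R) xR add1n.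
have R''W : R'' `<=` W.
  by rewrite fsubUset fsub1set (fsubsetP R'W _ yR') (fsubset_trans (fsubD1set _ _) RW).
have HR''d : #|` R'' `\` R'| = d.
  have -> : R'' `\` R' = (R `\` R') `\ x.
    apply/fsetP => z; rewrite !inE.
    case: (z =P y) => [->|zy] /=; first by rewrite yR' /= andbF.
    by case: (z \in R'); case: (z != x).
  by move: Hdd; rewrite (cardfsD1 x (R `\` R')) inE xR xR' add1n => -[].
apply: (IH R'') => //.
have r0 : 0 < r by move: Rr; rewrite (cardfsD1 x R) xR; lia.
have [C [CW Cr]] : exists C, C `<=` W `\` (y |` R) /\ #|` C| = r.
  apply: sub_exists; rewrite cardfsDS; last by rewrite fsubUset fsub1set (fsubsetP R'W _ yR') RW.
  rewrite cardfsU1 yR Rr; have := HW r0; lia.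
have CW' : C `<=` W by apply: fsubset_trans CW (fsubsetDl _ _).
have dis : forall A, A `<=` y |` R -> [disjoint A & C].
  move=> A AyR; apply/fdisjointP => z /(fsubsetP AyR) zA; apply/negP => /(fsubsetP CW).
  by rewrite inE zA.
apply: (Hd CW' R''W Cr R''r); first by rewrite fdisjoint_sym; apply: dis;
  rewrite /R'' fsetUS // fsubD1set.
apply: (Hd RW CW' Rr Cr) => //; apply: dis; exact: fsubsetU1.
Qed.

End Kneser.

Lemma kneser r (W : {fset nat}) (P : {fset nat} -> Prop) R1 R2 :
  (0 < r -> 2 * r + 1 <= #|` W|) -> R1 `<=` W -> R2 `<=` W -> #|` R1| = r -> #|` R2| = r ->
  P R1 -> ~ P R2 ->
  exists A B, [/\ A `<=` W, B `<=` W, #|` A| = r, #|` B| = r & [/\ [disjoint A & B], P A & ~ P B]].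
Proof.
move=> HW R1W R2W R1r R2r P1 P2.
apply: NNPP => Hn; apply: P2.
apply: (@kneser_aux r W P _ HW _ R1 R2 (erefl _)) => // A B AW BW Ar Br dAB PA.
apply: NNPP => nPB; apply: Hn; exists A, B; split => //.
Qed.

Lemma sw_subset i j e f : (sw i j e `<=` sw i j f) = (e `<=` f).
Proof.
apply/fsubsetP/fsubsetP => H x.
  by move=> xe; have := H (tr i j x); rewrite !in_sw tr_invol => /(_ xe).
by rewrite !in_sw; apply: H.
Qed.

Lemma sw_disj2 i j e S : [disjoint sw i j e & S] = [disjoint e & sw i j S].
Proof. by rewrite -{1}(sw_invol i j S) sw_disjoint. Qed.

Lemma sw_sub2 i j e T : (sw i j e `<=` T) = (e `<=` sw i j T).
Proof. by rewrite -{1}(sw_invol i j T) sw_subset. Qed.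

Section Dich.
Variables (i j : nat) (F : {fset {fset nat}}).
Hypothesis ij : i != j.
Local Notation F' := (sh i j F).

Definition split_e a := [/\ i \in a, j \notin a, a \in F' & sw i j a \notin F'].

Lemma U1 : (forall a, split_e a -> a \in F) -> F' = F.
Proof.
move=> H; apply/fsetP => e.
case: (boolP (i \in e)) => ie; case: (boolP (j \in e)) => je.
- by rewrite sh_L3 // ie je.
- rewrite sh_L2 //; case: (boolP (e \in F)) => //= eF.
  apply/negP => sF.
  case: (boolP (sw i j e \in F')) => sF'.
    by move: sF'; rewrite sh_L1 ?in_sw_i ?in_sw_j // sw_invol (negPf eF) andbF.
  apply: (negP eF); apply: H; split => //.
  by rewrite sh_L2 // sF orbT.
- rewrite sh_L1 //; case: (boolP (e \in F)) => //= eF.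
  case: (boolP (e \in F')) => eF'; first by move: eF'; rewrite sh_L1 // eF.
  apply: H; split; rewrite ?in_sw_i ?in_sw_j ?sw_invol //.
  by rewrite sh_L2 ?in_sw_i ?in_sw_j // sw_invol eF orbT.
- by rewrite sh_L3 // (negPf ie) (negPf je).
Qed.

Lemma U2 : (forall a, split_e a -> sw i j a \in F) -> forall e, (e \in F) = (sw i j e \in F').
Proof.
move=> H e.
case: (boolP (i \in e)) => ie; case: (boolP (j \in e)) => je.
- by rewrite sw_fix ?ie ?je // sh_L3 // ie je.
- rewrite sh_L1 ?in_sw_i ?in_sw_j // sw_invol.
  case: (boolP (e \in F)) => eF; last by rewrite andbF.
  rewrite andbT; apply/esym.
  case: (boolP (sw i j e \in F')) => sF'.
    by move: sF'; rewrite sh_L1 ?in_sw_i ?in_sw_j // => /andP [].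
  by apply: H; split => //; rewrite sh_L2 // eF.
- rewrite sh_L2 ?in_sw_i ?in_sw_j // sw_invol.
  case: (boolP (e \in F)) => eF; first by rewrite orbT.
  rewrite orbF; apply/esym/negP => sF.
  case: (boolP (e \in F')) => eF'.
    by move: eF'; rewrite sh_L1 // (negPf eF).
  have := H (sw i j e); rewrite sw_invol => H'; apply: (negP eF); apply: H'.
  by split; rewrite ?in_sw_i ?in_sw_j ?sw_invol // sh_L2 ?in_sw_i ?in_sw_j // sF.
- by rewrite sw_fix ?(negPf ie) ?(negPf je) // sh_L3 // (negPf ie) (negPf je).
Qed.

Lemma trichotomy : F' = F \/ (forall e, (e \in F) = (sw i j e \in F')) \/
  exists a1 a2, [/\ split_e a1, a1 \in F, split_e a2 & sw i j a2 \in F /\ a2 \notin F].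
Proof.
case: (classic (exists a1, split_e a1 /\ a1 \in F)) => [[a1 [s1 F1]]|n1].
  case: (classic (exists a2, split_e a2 /\ a2 \notin F)) => [[a2 [s2 F2]]|n2].
    right; right; exists a1, a2; split => //; split => //.
    by case: s2 => ia ja; rewrite sh_L2 // (negPf F2).
  left; apply: U1 => a sa; apply: NNPP => /negP aF; apply: n2; by exists a.
right; left; apply: U2 => a sa.
have aF : a \notin F by apply/negP => aF; apply: n1; exists a.
by case: sa => ia ja; rewrite sh_L2 // (negPf aF).
Qed.

End Dich.

Lemma arith_cov n s k : 0 < s -> 0 < k.-1 -> k + s * k <= n -> n != 2 * k -> 2 * k.-1 + 1 <= (n - s).-1.
Proof.
move=> s0 k1 nsk n2k.
have hk : 1 < k by lia.
case: (s =P 1) => [s1|sn1]; first by subst; lia.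
have s2 : 1 < s by lia.
have h1 : 2 * k <= s * k := leq_mul s2 (leqnn k).
have h2 : s * 2 <= s * k := leq_mul (leqnn s) hk.
lia.
Qed.

Lemma arith_cov2 n s k : 0 < s -> 0 < k -> s.+1 * k <= n -> s.-1 * k <= n - (k.-1 + k.-1 + 2).
Proof.
move=> s0 k0; rewrite !mulSn.
have -> : s = s.-1.+1 by lia.
rewrite mulSn /=; lia.
Qed.

Lemma disj_sub (Y Y' X e : {fset nat}) : Y' `<=` Y -> e `<=` X `\` Y -> [disjoint Y' & e].
Proof.
move=> /fsubsetP YY /fsubsetP eX; apply/fdisjointP => x /YY xY; apply/negP => /eX.
by rewrite inE xY.
Qed.

Lemma meet_nonempty (e S : {fset nat}) : (e `&` S != fset0) <-> exists2 x, x \in e & x \in S.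
Proof.
split => [/fset0Pn [x]|[x xe xS]]; first by rewrite inE => /andP [xe xS]; exists x.
by apply/fset0Pn; exists x; rewrite inE xe xS.
Qed.

Lemma step_Cov k n s V F i j : i != j -> i \in V -> j \in V -> in_M k n s V F -> n != 2 * k ->
  in_Cov k n s V (sh i j F) -> in_Cov k n s V F.
Proof.
move=> ij iV jV HM n2k [nV [S [SV [Ss HS]]]].
case: (ltnP n (s.+1 * k)) => nsk.
  have FK := trivial_case HM nsk; rewrite FK in HS *; rewrite sh_Kc in HS => //.
  by split => //; exists S; split => //; split.
case: (trichotomy F ij) => [E|[E|[a1 [a2 [s1 F1 s2 [sF2 nF2]]]]]].
- by rewrite E in HS; split => //; exists S; split => //; split.
- split => //; exists (sw i j S); split; [|split].
  + by rewrite sw_sub.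
  + by rewrite card_sw.
  + by move=> e; rewrite E HS sw_sub // card_sw !fsetI_eq0 sw_disj2.
exfalso.
case: HM => [[kg [_ [_ Hmu]]] _].
case: s1 => ia1 ja1 a1F' sa1F'.
have [a1V [a1k a1S]] := iffLR (HS a1) a1F'.
have swa1 : sw i j a1 `&` S == fset0.
  apply: contraNT sa1F' => H; apply/(HS _); rewrite sw_sub // card_sw; split => //.
have k0 : 0 < k by rewrite -a1k cardfs_gt0; apply/fset0Pn; exists i.
rewrite sw_ij // in swa1.
have jS : j \notin S.
  by apply/negP => jS; move/eqP/fsetP: swa1 => /(_ j); rewrite !inE eqxx jS.
have iS : i \in S.
  case/meet_nonempty: a1S => x xa1 xS; case: (x =P i) => [<-//|xi].
  by move/eqP/fsetP: swa1 => /(_ x); rewrite !inE xa1 xS; move/eqP: xi => /negPf ->; rewrite orbT.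
set W := (V `\` S) `\ j.
have Wc : #|` W| = (n - s).-1.
  by move: (cardfsD1 j (V `\` S)); rewrite inE jS jV cardfsDS // nV Ss add1n => ->.
pose P R := (i |` R) \in F.
have Rsplit : forall a, split_e i j F a -> (a `\ i) `<=` W /\ #|` a `\ i| = k.-1.
  move=> a [ia ja aF' saF']; have [aV [ak aS]] := iffLR (HS a) aF'.
  have swa : sw i j a `&` S == fset0.
    apply: contraNT saF' => H; apply/(HS _); rewrite sw_sub // card_sw; split => //.
  rewrite sw_ij // in swa; split; last by move: ak; rewrite (cardfsD1 i a) ia add1n => <-.
  apply/fsubsetP => x /fsetD1P [xi xa]; rewrite !inE (fsubsetP aV _ xa) andbT.
  move/eqP/fsetP: swa => /(_ x); rewrite !inE xi xa /= => H.
  apply/andP; split; first by apply/negP => /eqP E; move: ja; rewrite -E xa.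
  by apply/negP => xS; move: H; rewrite xS orbT.
have [R1W R1k] := Rsplit _ (And4 ia1 ja1 a1F' sa1F').
have [R2W R2k] := Rsplit _ s2.
have P1 : P (a1 `\ i) by rewrite /P fsetD1K.
have P2 : ~ P (a2 `\ i) by case: s2 => ia2 _ _ _; rewrite /P fsetD1K //; apply/negP.
have HW : 0 < k.-1 -> 2 * k.-1 + 1 <= #|` W|.
  have s0 : 0 < s by rewrite -Ss cardfs_gt0; apply/fset0Pn; exists i.
  rewrite Wc => k1; apply: arith_cov => //; by rewrite -mulSn.
have [A [B [AW BW Ak Bk [dAB PA nPB]]]] := @kneser _ _ P _ _ HW R1W R2W R1k R2k P1 P2.
have inW : forall x, x \in W -> [/\ x \in V, x \notin S & x != j].
  by move=> x; rewrite !inE => /andP [-> /andP [-> ->]].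
have iA : i \notin A by apply/negP => /(fsubsetP AW) /inW [_]; rewrite iS.
have iB : i \notin B by apply/negP => /(fsubsetP BW) /inW [_]; rewrite iS.
have jA : j \notin A by apply/negP => /(fsubsetP AW) /inW [_ _]; rewrite eqxx.
have jB : j \notin B by apply/negP => /(fsubsetP BW) /inW [_ _]; rewrite eqxx.
have kk : k.-1.+1 = k by rewrite prednK.
have jBF : (j |` B) \in F.
  set b := i |` B.
  have ib : i \in b by rewrite fset1U1.
  have jb : j \notin b by rewrite !inE negb_or jB andbT eq_sym.
  have bF' : b \in sh i j F.
    apply/(HS b); split; last split.
    - rewrite fsubUset fsub1set iV; apply/fsubsetP => x /(fsubsetP BW) /inW [] //.
    - by rewrite cardfsU1 iB Bk add1n.
    - by apply/meet_nonempty; exists i.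
  have nbF : (b \in F) = false by apply/negP.
  move: bF'; rewrite sh_L2 // nbF /= sw_ij // /b fsetU1K //.
have iAF : (i |` A) \in F by [].
set X := V `\` (A `|` B `|` [fset i; j]).
set S0 := S `\ i.
have S0X : S0 `<=` X.
  apply/fsubsetP => x /fsetD1P [xi xS]; rewrite !inE (fsubsetP SV _ xS) andbT.
  rewrite (negPf xi) /=; apply/negP => /orP [/orP [] H|/eqP E].
  - by have := inW _ (fsubsetP AW _ H); case => _; rewrite xS.
  - by have := inW _ (fsubsetP BW _ H); case => _; rewrite xS.
  - by move: jS; rewrite -E xS.
have S0c : #|` S0| = s.-1 by move: Ss; rewrite (cardfsD1 i S) iS add1n => <-.
have Yc : #|` A `|` B `|` [fset i; j]| = (k.-1 + k.-1 + 2)%N.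
  rewrite card_disjU; last first.
    apply/fdisjointP => x; rewrite !inE => xAB; apply/negP => /orP [] /eqP E; subst x.
    - by move: xAB; rewrite (negPf iA) (negPf iB).
    - by move: xAB; rewrite (negPf jA) (negPf jB).
  by rewrite card_disjU // Ak Bk cardfs2 ij.
have YV : A `|` B `|` [fset i; j] `<=` V.
  have WV : W `<=` V by apply: fsubset_trans (fsubD1set _ _) (fsubsetDl _ _).
  rewrite !fsubUset !fsub1set iV jV (fsubset_trans AW WV) (fsubset_trans BW WV).
  by [].
have Xc : s.-1 * k <= #|` X|.
  rewrite /X cardfsDS // Yc nV; apply: arith_cov2 => //.
  by rewrite -Ss cardfs_gt0; apply/fset0Pn; exists i.
have [M1 [M1c M1e M1d]] := fill k0 S0X S0c Xc.
have M1F : is_matching F M1.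
  split => //; apply/fsubsetP => e eM; have [eX ek eS0] := M1e _ eM.
  have ie : i \notin e by apply/negP => /(fsubsetP eX); rewrite !inE eqxx orbT.
  have je : j \notin e by apply/negP => /(fsubsetP eX); rewrite !inE eqxx !orbT.
  rewrite -(sh_L3 F ij); last by rewrite (negPf ie) (negPf je).
  apply/(HS e); split; last split => //.
    exact: fsubset_trans eX (fsubsetDl _ _).
  case/meet_nonempty: eS0 => x xe /fsetD1P [_ xS]; apply/meet_nonempty; by exists x.
have jB0 : j |` B != fset0 by apply/fset0Pn; exists j; exact: fset1U1.
have iA0 : i |` A != fset0 by apply/fset0Pn; exists i; exact: fset1U1.
have dM1 : forall Y', Y' `<=` A `|` B `|` [fset i; j] -> forall e, e \in M1 -> [disjoint Y' & e].
  move=> Y' HY e eM; have [eX _ _] := M1e _ eM; exact: disj_sub HY eX.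
have jBsub : j |` B `<=` A `|` B `|` [fset i; j].
  by apply/fsubsetP => x; rewrite !inE => /orP [->|->]; rewrite ?orbT.
have iAsub : i |` A `<=` A `|` B `|` [fset i; j].
  by apply/fsubsetP => x; rewrite !inE => /orP [->|->]; rewrite ?orbT.
have [M2F M2c] := add_matching M1F jBF jB0 (dM1 _ jBsub).
have dM2 : forall e, e \in (j |` B) |` M1 -> [disjoint i |` A & e].
  move=> e /fset1UP [->|eM]; last exact: dM1.
  apply/fdisjointP => x; rewrite !inE => /orP [/eqP ->|xA].
    by rewrite negb_or (negPf iB) andbT.
  rewrite negb_or; apply/andP; split.
    by apply/negP => /eqP E; move: jA; rewrite -E xA.
  by move/fdisjointP: dAB => /(_ x xA).
have [M3F M3c] := add_matching M2F iAF iA0 dM2.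
have s0 : 0 < s by rewrite -Ss cardfs_gt0; apply/fset0Pn; exists i.
by have := Hmu _ M3F; rewrite M3c M2c M1c prednK // ltnn.
Qed.

Lemma cardU_le (A B : {fset {fset nat}}) : #|` A `|` B| <= #|` A| + #|` B|.
Proof. by rewrite -cardfsUI leq_addr. Qed.

Lemma card_disjUG (K : choiceType) (A B : {fset K}) : [disjoint A & B] -> #|` A `|` B| = (#|` A| + #|` B|)%N.
Proof. by move=> d; rewrite cardfsU (disjoint_fsetI0 d) cardfs0 subn0. Qed.

Lemma card_g_arith k : 1 < k -> (1 + (1 + (k * 1 + k - 1 - 1 - k)))%N = k.
Proof. lia. Qed.

Lemma star_contra k n (V T : {fset nat}) i (F' : {fset {fset nat}}) : 1 < k -> 2 * k < n ->
  #|` V| = n -> T `<=` V -> #|` T| = k * 1 + k - 1 -> i \in T ->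
  (forall e, e \in F' <-> e `<=` T /\ #|` e| = k) ->
  exists Y, in_H k n 1 V Y /\ #|` F'| < #|` Y|.
Proof.
move=> k1 nk nV TV Tc iT HT.
have iV : i \in V := fsubsetP TV _ iT.
set Y := [fset e in Kc k V | i \in e].
have inY : forall e, (e \in Y) = [&& e `<=` V, #|` e| == k & i \in e].
  by move=> e; rewrite /Y !inE /= fpowersetE -andbA.
exists Y; split.
  split; first by apply/kgraphP; apply/fsubsetP => e; rewrite inY in_Kc => /and3P [-> ->].
  split => //; split.
    have [D [DV Dc]] : exists D, D `<=` V `\ i /\ #|` D| = k.-1.
      apply: sub_exists; move: nV; rewrite (cardfsD1 i V) iV add1n.
      by move: k1 nk; clear; lia.
    have iD : i \notin D by apply/negP => /(fsubsetP DV); rewrite !inE eqxx.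
    exists [fset i |` D]; split; last exact: cardfs1.
    split; last by move=> e f /fset1P -> /fset1P ->; rewrite eqxx.
    rewrite fsub1set inY fset1U1 andbT fsubUset fsub1set iV (fsubset_trans DV) ?fsubD1set //=.
    by rewrite cardfsU1 iD Dc; apply/eqP; move: k1; clear; lia.
  move=> M [MY Md]; rewrite leqNgt; apply/negP => M2.
  have : M != fset0 by rewrite -cardfs_eq0; apply/negP => /eqP E; move: M2; rewrite E.
  case/fset0Pn => e eM.
  have : M `\ e != fset0.
    by rewrite -cardfs_eq0; move: M2; rewrite (cardfsD1 e M) eM; apply: contraTneq => ->.
  case/fset0Pn => f /fsetD1P [fe fM].
  have := fsubsetP MY _ eM; rewrite inY => /and3P [_ _ ie].
  have := fsubsetP MY _ fM; rewrite inY => /and3P [_ _ if_].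
  by move/fdisjointP: (Md _ _ fM eM fe) => /(_ i if_); rewrite ie.
set T' := T `\ i.
have T'c : #|` T'| = (k * 1 + k - 1 - 1)%N by move: Tc; rewrite (cardfsD1 i T) iT add1n => <-; rewrite subn1.
have [z zVT] : exists z, z \in V `\` T.
  apply/fset0Pn; rewrite -cardfs_eq0 cardfsDS // nV Tc; apply/eqP.
  by move: k1 nk; clear; lia.
have [z' /fsetD1P [z'z z'VT]] : exists z', z' \in (V `\` T) `\ z.
  apply/fset0Pn; rewrite -cardfs_eq0; apply/eqP => E.
  have := cardfsDS TV; rewrite (cardfsD1 z (V `\` T)) zVT E nV Tc.
  by move: k1 nk; clear; lia.
move: zVT z'VT; rewrite !inE => /andP [zT zV] /andP [z'T z'V].
have iz : i != z by apply/negP => /eqP E; move: zT; rewrite -E iT.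
have iz' : i != z' by apply/negP => /eqP E; move: z'T; rewrite -E iT.
set C1 := [fset e in F' | i \in e].
set C2 := [fset e in F' | i \notin e].
have F'C : F' = C1 `|` C2.
  by apply/fsetP => e; rewrite !inE /=; case: (e \in F'); case: (i \in e).
pose g e := i |` (z |` (T' `\` e)).
have C2T : forall e, e \in C2 -> e `<=` T' /\ #|` e| = k.
  move=> e; rewrite !inE /= => /andP [/HT [eT ek] ie]; split => //.
  apply/fsubsetP => x xe; rewrite !inE (fsubsetP eT _ xe) andbT; apply/negP => /eqP E; move: ie; by rewrite -E xe.
have gY : forall e, e \in C2 -> g e \in Y.
  move=> e /C2T [eT' ek].
  rewrite inY fset1U1 andbT; apply/andP; split.
    rewrite /g !fsubUset !fsub1set iV zV /=; apply: fsubset_trans (fsubsetDl _ _) _.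
    exact: fsubset_trans (fsubD1set _ _) TV.
  rewrite /g cardfsU1 cardfsU1 cardfsDS // T'c ek.
  have -> : i \notin z |` (T' `\` e) by rewrite !inE (negPf iz) eqxx /= andbF.
  have -> : z \notin T' `\` e by rewrite !inE (negPf zT) !andbF.
  by rewrite card_g_arith.
have ginj : {in C2 &, injective g}.
  move=> e1 e2 /C2T [e1T _] /C2T [e2T _] E.
  have key : forall e, e `<=` T' -> T' `&` g e = T' `\` e.
    move=> e eT; apply/fsetP => x; rewrite /g !inE.
    case: (x =P i) => [->|xi] /=; first by rewrite andbF.
    case: (x =P z) => [->|xz] /=; first by rewrite (negPf zT) !andbF.
    by case: (x \in e); case: (x \in T).
  by rewrite -(fsetDK e1T) -(fsetDK e2T) -(key e1 e1T) -(key e2 e2T) E.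
set G := [fset g e | e in C2].
have Gc : #|` G| = #|` C2| by rewrite /G card_in_imfset.
have GY : G `<=` Y by apply/fsubsetP => x /imfsetP [e eC ->]; exact: gY.
have zG : forall x, x \in G -> z \in x.
  by move=> x /imfsetP [e _ ->]; rewrite /g !inE eqxx orbT.
have C1T : forall x, x \in C1 -> x `<=` T by move=> x; rewrite !inE /= => /andP [/HT []].
have C1Y : C1 `<=` Y.
  apply/fsubsetP => x xC; rewrite inY; move: xC; rewrite !inE /= => /andP [/HT [xT xk] ix].
  by rewrite (fsubset_trans xT TV) xk eqxx.
have dC1G : [disjoint C1 & G].
  apply/fdisjointP => x /C1T xT; apply/negP => /zG /(fsubsetP xT); by rewrite (negPf zT).
have [D [DT' Dc]] : exists D, D `<=` T' /\ #|` D| = (k * 1 + k - 1 - 1 - k)%N.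
  by apply: sub_exists; rewrite T'c; move: k1; clear; lia.
set h := i |` (z' |` D).
have hY : h \in Y.
  rewrite inY fset1U1 andbT; apply/andP; split.
    rewrite /h !fsubUset !fsub1set iV z'V /=.
    exact: fsubset_trans DT' (fsubset_trans (fsubD1set _ _) TV).
  have iD : i \notin D by apply/negP => /(fsubsetP DT'); rewrite !inE eqxx.
  have z'D : z' \notin D by apply/negP => /(fsubsetP DT'); rewrite inE (negPf z'T) andbF.
  rewrite /h cardfsU1 cardfsU1 Dc !inE negb_or iz' iD z'D /=.
  by rewrite card_g_arith.
have hC1G : h \notin C1 `|` G.
  rewrite inE negb_or; apply/andP; split.
    by apply/negP => /C1T /fsubsetP /(_ z'); rewrite /h !inE eqxx orbT (negPf z'T) => /(_ isT).
  apply/negP => /zG /fset1UP [E|/fset1UP [E|zD]].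
  - by move: iz; rewrite E eqxx.
  - by move: z'z; rewrite E eqxx.
  - by move: (fsubsetP DT' _ zD); rewrite !inE (negPf zT) andbF.
have : h |` (C1 `|` G) `<=` Y by rewrite fsubUset fsub1set hY fsubUset C1Y GY.
move/fsubset_leq_card; rewrite cardfsU1 hC1G card_disjUG // Gc add1n.
move=> H; rewrite F'C; apply: leq_ltn_trans H; exact: cardU_le.
Qed.

Lemma arith_cl0 k : 0 < k -> k <= k * 0 + k - 1 -> False.
Proof. lia. Qed.
Lemma arith_cl n k : n != 2 * k -> 1.+1 * k <= n -> 2 * k < n.
Proof. lia. Qed.
Lemma arith_cl1 s k : 0 < s -> (s = 1 -> k <= 1) -> 0 < k.-1 -> 2 * k.-1 + 1 <= (k * s + k - 1).-1.
Proof.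
move=> s0 H k1.
have s2 : 1 < s by case: (s =P 1) => [/H|]; lia.
have h1 : k * 2 <= k * s := leq_mul (leqnn k) s2.
lia.
Qed.
Lemma arith_cl2 s k : 0 < s -> 0 < k -> s.-1 * k <= (k * s + k - 1) - (k.-1 + k.-1 + 1).
Proof.
move=> s0 k0; have -> : s = s.-1.+1 by lia.
rewrite /= mulnS mulnC. lia.
Qed.

Lemma step_Cl k n s V F i j : i != j -> i \in V -> j \in V -> in_M k n s V F -> n != 2 * k ->
  in_Cl k n s V (sh i j F) -> in_Cl k n s V F.
Proof.
move=> ij iV jV HM n2k [nV [T [TV [Tc HT]]]].
case: (ltnP n (s.+1 * k)) => nsk.
  have FK := trivial_case HM nsk; rewrite FK in HT *; rewrite sh_Kc in HT => //.
  by split => //; exists T; split => //; split.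
case: (trichotomy F ij) => [E|[E|[a1 [a2 [s1 F1 s2 [sF2 nF2]]]]]].
- by rewrite E in HT; split => //; exists T; split => //; split.
- split => //; exists (sw i j T); split; [|split].
  + by rewrite sw_sub.
  + by rewrite card_sw.
  + by move=> e; rewrite E HT sw_sub2 card_sw.
exfalso.
case: HM => [[kg [_ [_ Hmu]]] Hmax].
case: s1 => ia1 ja1 a1F' sa1F'.
have [a1T a1k] := iffLR (HT a1) a1F'.
have k0 : 0 < k by rewrite -a1k cardfs_gt0; apply/fset0Pn; exists i.
have iT : i \in T := fsubsetP a1T _ ia1.
have jT : j \notin T.
  apply/negP => jT; apply: (negP sa1F'); apply/(HT _); rewrite card_sw; split => //.
  rewrite sw_ij // fsubUset fsub1set jT; exact: fsubset_trans (fsubD1set _ _) a1T.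
set W := T `\ i.
have Wc : #|` W| = (k * s + k - 1).-1.
  by move: Tc; rewrite (cardfsD1 i T) iT add1n => <-.
pose P R := (i |` R) \in F.
have Rsplit : forall a, split_e i j F a -> (a `\ i) `<=` W /\ #|` a `\ i| = k.-1.
  move=> a [ia ja aF' saF']; have [aT ak] := iffLR (HT a) aF'.
  split; last by move: ak; rewrite (cardfsD1 i a) ia add1n => <-.
  by apply/fsubsetP => x /fsetD1P [xi xa]; rewrite !inE xi (fsubsetP aT _ xa).
have [R1W R1k] := Rsplit _ (And4 ia1 ja1 a1F' sa1F').
have [R2W R2k] := Rsplit _ s2.
have P1 : P (a1 `\ i) by rewrite /P fsetD1K.
have P2 : ~ P (a2 `\ i) by case: s2 => ia2 _ _ _; rewrite /P fsetD1K //; apply/negP.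
case: (posnP s) => [s0|s0].
  by have := fsubset_leq_card a1T; rewrite a1k Tc s0; apply: arith_cl0.
case: (classic (s = 1 /\ 1 < k)) => [[s1 k1]|ns1].
  subst s.
  have [Y [HY Yc]] := star_contra k1 (arith_cl n2k nsk) nV TV Tc iT HT.
  by have := Hmax _ _ HY; rewrite -(card_sh F ij) leqNgt Yc.
have HW : 0 < k.-1 -> 2 * k.-1 + 1 <= #|` W|.
  rewrite Wc; apply: arith_cl1 => // s1; case: (leqP k 1) => // k1; by case: ns1.
have [A [B [AW BW Ak Bk [dAB PA nPB]]]] := @kneser _ _ P _ _ HW R1W R2W R1k R2k P1 P2.
have inW : forall x, x \in W -> x \in T /\ x != i by move=> x; rewrite !inE => /andP [-> ->].
have iA : i \notin A by apply/negP => /(fsubsetP AW) /inW [_]; rewrite eqxx.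
have iB : i \notin B by apply/negP => /(fsubsetP BW) /inW [_]; rewrite eqxx.
have jA : j \notin A by apply/negP => /(fsubsetP AW) /inW [jT' _]; move: jT; rewrite jT'.
have jB : j \notin B by apply/negP => /(fsubsetP BW) /inW [jT' _]; move: jT; rewrite jT'.
have WT : W `<=` T := fsubD1set _ _.
have jBF : (j |` B) \in F.
  set b := i |` B.
  have ib : i \in b by rewrite fset1U1.
  have jb : j \notin b by rewrite !inE negb_or jB andbT eq_sym.
  have bF' : b \in sh i j F.
    apply/(HT b); split.
    - by rewrite fsubUset fsub1set iT (fsubset_trans BW WT).
    - by rewrite cardfsU1 iB Bk add1n prednK.
  have nbF : (b \in F) = false by apply/negP.
  move: bF'; rewrite sh_L2 // nbF /= sw_ij // /b fsetU1K //.
have iAF : (i |` A) \in F by [].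
set Y0 := A `|` B `|` [fset i].
set X := T `\` Y0.
have Y0T : Y0 `<=` T by rewrite !fsubUset fsub1set iT (fsubset_trans AW WT) (fsubset_trans BW WT).
have Y0c : #|` Y0| = (k.-1 + k.-1 + 1)%N.
  rewrite card_disjU; last by rewrite fdisjointX1 inE negb_or iA iB.
  by rewrite card_disjU // Ak Bk cardfs1.
have Xc : s.-1 * k <= #|` X| by rewrite /X cardfsDS // Y0c Tc; apply: arith_cl2.
have [S0 [S0X S0c]] : exists S0, S0 `<=` X /\ #|` S0| = s.-1.
  by apply: sub_exists; apply: leq_trans Xc; apply: leq_pmulr.
have [M1 [M1c M1e M1d]] := fill k0 S0X S0c Xc.
have M1F : is_matching F M1.
  split => //; apply/fsubsetP => e eM; have [eX ek _] := M1e _ eM.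
  have eT : e `<=` T := fsubset_trans eX (fsubsetDl _ _).
  have ie : i \notin e by apply/negP => /(fsubsetP eX); rewrite !inE eqxx !orbT.
  have je : j \notin e by apply/negP => /(fsubsetP eT); apply/negP.
  rewrite -(sh_L3 F ij); last by rewrite (negPf ie) (negPf je).
  by apply/(HT e).
have dM1 : forall Y', Y' `<=` Y0 -> forall e, e \in M1 -> [disjoint Y' & e].
  move=> Y' HY e eM; have [eX _ _] := M1e _ eM; exact: disj_sub HY eX.
have jB0 : j |` B != fset0 by apply/fset0Pn; exists j; exact: fset1U1.
have iA0 : i |` A != fset0 by apply/fset0Pn; exists i; exact: fset1U1.
have dM1j : forall e, e \in M1 -> [disjoint j |` B & e].
  move=> e eM; have [eX _ _] := M1e _ eM.
  have eT : e `<=` T := fsubset_trans eX (fsubsetDl _ _).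
  apply/fdisjointP => x /fset1UP [->|xB].
    by apply/negP => /(fsubsetP eT); apply/negP.
  have /fdisjointP := dM1 B (fsubset_trans (fsubsetUr _ _) (fsubsetUl _ _)) _ eM.
  by apply.
have [M2F M2c] := add_matching M1F jBF jB0 dM1j.
have iAsub : i |` A `<=` Y0.
  by apply/fsubsetP => x; rewrite !inE => /orP [->|->]; rewrite ?orbT.
have dM2 : forall e, e \in (j |` B) |` M1 -> [disjoint i |` A & e].
  move=> e /fset1UP [->|eM]; last exact: dM1.
  apply/fdisjointP => x; rewrite !inE => /orP [/eqP ->|xA].
    by rewrite negb_or (negPf iB) andbT.
  rewrite negb_or; apply/andP; split.
    by apply/negP => /eqP E; move: jA; rewrite -E xA.
  by move/fdisjointP: dAB => /(_ x xA).
have [M3F M3c] := add_matching M2F iAF iA0 dM2.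
by have := Hmu _ M3F; rewrite M3c M2c M1c prednK // ltnn.
Qed.

Lemma valid_cons V p ps : valid_shifts V (p :: ps) ->
  [/\ p.1 \in V, p.2 \in V, p.1 != p.2 & valid_shifts V ps].
Proof.
move=> H; have [a b c] := H p (mem_head _ _); split => //.
  by rewrite neq_ltn c.
by move=> q qps; apply: H; rewrite in_cons qps orbT.
Qed.

Unset Implicit Arguments.
Theorem lemma6 (k n s : nat) (V : {fset nat}) (E : {fset {fset nat}})
  (ps : seq (nat * nat)) :
  in_M k n s V E ->
  valid_shifts V ps ->
  (forall i j, i \in V -> j \in V -> i < j -> sh i j (sh_seq ps E) = sh_seq ps E) ->
  [/\ in_M k n s V (sh_seq ps E),
      (n != 2 * k -> in_Cov k n s V (sh_seq ps E) -> in_Cov k n s V E) &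
      (n != 2 * k -> in_Cl k n s V (sh_seq ps E) -> in_Cl k n s V E)].
Proof.
move=> HM Hv _.
elim: ps E HM Hv => [|p ps IH] E HM Hv; first by split.
have [p1 p2 p12 Hv'] := @valid_cons _ _ _ Hv.
have HM' := sh_M p12 p1 p2 HM.
have [IH1 IH2 IH3] := IH _ HM' Hv'.
split => //.
- by move=> n2k /(IH2 n2k); apply: step_Cov.
- by move=> n2k /(IH3 n2k); apply: step_Cl.
Qed.
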